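(* Let $D$ be an nc-domain, $\mathcal H,\mathcal K$ Hilbert spaces, and $f$ an $\mathcal L(\mathcal H,\mathcal K)$-valued nc-function on $D$. Let $\mathcal V,\mathcal W$ be finite dimensional vector spaces, and let $R$ be a $d$-tuple of linear maps on $\mathcal V$, $T$ a $d$-tuple of linear maps on $\mathcal W$, and $L:\mathcal V\to\mathcal W$ linear. If $R,T\in D^{\mathrm{sss}}$ and $T L=L R$ (i.e. $T^rL=LR^r$ for all $r$), then $f^{\mathrm{sss}}(T)(L\otimes I_{\mathcal H})=(L\otimes I_{\mathcal K})f^{\mathrm{sss}}(R)$.
   Context: An nc-domain $D\subseteq\bigcup_n\mathcal M_n^d$ is a set closed under direct sums and unitary conjugation with each level open. An $\mathcal L(\mathcal H,\mathcal K)$-valued nc-function on $D$ is a map $f$ with $f(x)\in\mathcal L(\mathbb C^n\otimes\mathcal H,\mathbb C^n\otimes\mathcal K)$ for $x\in D\cap\mathcal M_n^d$, $f(x\oplus y)=f(x)\oplus f(y)$, and $f(s^{-1}xs)=(s^{-1}\otimes I_{\mathcal K})f(x)(s\otimes I_{\mathcal H})$ whenever $s$ is invertible and $x,s^{-1}xs\in D$. $D^{\mathrm{sss}}$ is the set of $d$-tuples $T$ of linear maps on some $n$-dimensional vector space $\mathcal V$ for which there is an invertible linear $S:\mathcal V\to\mathbb C^n$ with $STS^{-1}=(ST^1S^{-1},\dots,ST^dS^{-1})\in D\cap\mathcal M_n^d$; for such $T$, $f^{\mathrm{sss}}(T)=(S^{-1}\otimes I_{\mathcal K})f(STS^{-1})(S\otimes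 I_{\mathcal H}):\mathcal V\otimes\mathcal H\to\mathcal V\otimes\mathcal K$ (this is well defined). *)

(* Defs.v *)
From HB Require Import structures.
From mathcomp Require Import all_boot all_order all_algebra.
From mathcomp Require Import reals.
From mathcomp Require Import complex.

Set Implicit Arguments.
Unset Strict Implicit.
Unset Printing Implicit Defensive.

Import Order.TTheory GRing.Theory Num.Theory.
Local Open Scope ring_scope.

Section NC.
Variable R : realType.
Local Notation C := R[i].

Definition ipnorm (H : lmodType C) (ip : H -> H -> C) (x : H) : C :=
  sqrtC (ip x x).

Definition is_hilbert (H : lmodType C) (ip : H -> H -> C) : Prop :=
  [/\ (forall (a : C) (x y z : H), ip (a *: x + y) z = a * ip x z + ip y z),
      (forall x y : H, ip y x = (ip x y)^*),
      (forall x : H, 0 <= ip x x),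
      (forall x : H, ip x x = 0 -> x = 0) &
      (forall u : nat -> H,
         (forall e : C, 0 < e -> exists N : nat, forall m n : nat,
            (N <= m)%N -> (N <= n)%N -> ipnorm ip (u m - u n) < e) ->
         exists l : H, forall e : C, 0 < e -> exists N : nat, forall m : nat,
            (N <= m)%N -> ipnorm ip (u m - l) < e)].

(* The Hilbert norm of C^n (x) H = H^n. *)
Definition ampnorm (H : lmodType C) (ip : H -> H -> C) (n : nat)
  (u : {ffun 'I_n -> H}) : C := sqrtC (\sum_i ip (u i) (u i)).

Definition is_bdd_op (H K : lmodType C) (ipH : H -> H -> C) (ipK : K -> K -> C)
  (n : nat) (A : {ffun 'I_n -> H} -> {ffun 'I_n -> K}) : Prop :=
  (forall (a : C) (u v : {ffun 'I_n -> H}), A (a *: u + v) = a *: A u + A v) /\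
  (exists M : C, forall u, ampnorm ipK (A u) <= M * ampnorm ipH u).

(* s (x) I_H for a matrix s acting on column vectors of C^n. *)
Definition mxtens (H : lmodType C) (n : nat) (s : 'M[C]_n)
  (u : {ffun 'I_n -> H}) : {ffun 'I_n -> H} :=
  [ffun i => \sum_j s i j *: u j].

Definition dsum_op (H K : lmodType C) (n m : nat)
  (A : {ffun 'I_n -> H} -> {ffun 'I_n -> K})
  (B : {ffun 'I_m -> H} -> {ffun 'I_m -> K})
  (u : {ffun 'I_(n + m) -> H}) : {ffun 'I_(n + m) -> K} :=
  [ffun i => match split i with
             | inl a => A [ffun k => u (lshift m k)] a
             | inr b => B [ffun k => u (rshift n k)] b
             end].

Definition tuple_dsum (d n m : nat) (x : 'I_d -> 'M[C]_n) (y : 'I_d -> 'M[C]_m)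
  : 'I_d -> 'M[C]_(n + m) := fun r => block_mx (x r) 0 0 (y r).

Definition tuple_conj (d n : nat) (s t : 'M[C]_n) (x : 'I_d -> 'M[C]_n)
  : 'I_d -> 'M[C]_n := fun r => s *m x r *m t.

Definition adjmx (n : nat) (U : 'M[C]_n) : 'M[C]_n := (map_mx (fun z => z^*) U)^T.

Definition unitary (n : nat) (U : 'M[C]_n) : Prop := adjmx U *m U = 1%:M.

Definition level_open (d n : nat) (Dn : ('I_d -> 'M[C]_n) -> Prop) : Prop :=
  forall x, Dn x -> exists2 e : C, 0 < e &
    forall y : 'I_d -> 'M[C]_n,
      (forall r i j, `|y r i j - x r i j| < e) -> Dn y.

Definition nc_domain (d : nat) (D : forall n, ('I_d -> 'M[C]_n) -> Prop) : Prop :=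
  [/\ (forall n m x y, D n x -> D m y -> D (n + m)%N (tuple_dsum x y)),
      (forall n (U : 'M[C]_n) x, unitary U -> D n x -> D n (tuple_conj (adjmx U) U x)) &
      (forall n, level_open (D n))].

Definition nc_function (d : nat) (D : forall n, ('I_d -> 'M[C]_n) -> Prop)
  (H K : lmodType C) (ipH : H -> H -> C) (ipK : K -> K -> C)
  (f : forall n, ('I_d -> 'M[C]_n) -> {ffun 'I_n -> H} -> {ffun 'I_n -> K}) : Prop :=
  [/\ (forall n x, D n x -> is_bdd_op ipH ipK (f n x)),
      (forall n m x y, D n x -> D m y ->
         forall u, f (n + m)%N (tuple_dsum x y) u = dsum_op (f n x) (f m y) u) &
      (forall n (s : 'M[C]_n) x, s \in unitmx -> D n x ->
         D n (tuple_conj (invmx s) s x) ->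
         forall u, f n (tuple_conj (invmx s) s x) u
                   = mxtens (invmx s) (f n x (mxtens s u)))].

(* V (x) H is modelled as H^(dim V) via the basis vbasis {:V} of V:
   the element sum_j b_j (x) u_j is represented by u. *)
Definition vtens (V : vectType C) (H : lmodType C) := {ffun 'I_(\dim {:V}) -> H}.

Definition hom_tens (V W : vectType C) (H : lmodType C) (L : 'Hom(V, W))
  (u : vtens V H) : vtens W H :=
  [ffun i => \sum_j coord (vbasis {:W}) i (L (tnth (vbasis {:V}) j)) *: u j].

(* S (x) I_H for S : V -> C^n, n = dim V (C^n realized as row vectors). *)
Definition to_tens (V : vectType C) (H : lmodType C)
  (S : 'Hom(V, 'rV[C]_(\dim {:V}))) (u : vtens V H) : {ffun 'I_(\dim {:V}) -> H} :=
  [ffun i => \sum_j (S (tnth (vbasis {:V}) j)) 0 i *: u j].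

Definition from_tens (V : vectType C) (H : lmodType C)
  (Si : 'Hom('rV[C]_(\dim {:V}), V)) (u : {ffun 'I_(\dim {:V}) -> H}) : vtens V H :=
  [ffun i => \sum_j coord (vbasis {:V}) i (Si (delta_mx 0 j)) *: u j].

(* S T S^-1 as a d-tuple of (dim V) x (dim V) matrices (acting on columns). *)
Definition sim_tuple (d : nat) (V : vectType C)
  (S : 'Hom(V, 'rV[C]_(\dim {:V}))) (Si : 'Hom('rV[C]_(\dim {:V}), V))
  (T : 'I_d -> 'End(V)) : 'I_d -> 'M[C]_(\dim {:V}) :=
  fun r => \matrix_(i, j) (S (T r (Si (delta_mx 0 j)))) 0 i.

(* S witnesses T \in D^sss : S is an invertible linear map V -> C^(dim V)
   with inverse Si, and S T S^-1 \in D. *)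
Definition sss_witness (d : nat) (D : forall n, ('I_d -> 'M[C]_n) -> Prop)
  (V : vectType C) (T : 'I_d -> 'End(V))
  (S : 'Hom(V, 'rV[C]_(\dim {:V}))) (Si : 'Hom('rV[C]_(\dim {:V}), V)) : Prop :=
  [/\ cancel S Si, cancel Si S & D (\dim {:V}) (sim_tuple S Si T)].

Definition f_sss (d : nat) (H K : lmodType C)
  (f : forall n, ('I_d -> 'M[C]_n) -> {ffun 'I_n -> H} -> {ffun 'I_n -> K})
  (V : vectType C) (T : 'I_d -> 'End(V))
  (S : 'Hom(V, 'rV[C]_(\dim {:V}))) (Si : 'Hom('rV[C]_(\dim {:V}), V))
  (u : vtens V H) : vtens V K :=
  from_tens Si (f (\dim {:V}) (sim_tuple S Si T) (to_tens S u)).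

End NC.

(* Main.v *)
Require Import Defs.
From HB Require Import structures.
From mathcomp Require Import all_boot all_order all_algebra.
From mathcomp Require Import reals.
From mathcomp Require Import complex.
From Stdlib Require Import FunctionalExtensionality.
Import Order.TTheory GRing.Theory Num.Theory.
Local Open Scope ring_scope.
Set Implicit Arguments.
Unset Strict Implicit.

Section Aux.
Variable R : realType.
Local Notation C := R[i].

Definition gtens (H : lmodType C) m n (A : 'M[C]_(m, n)) (u : {ffun 'I_n -> H})
  : {ffun 'I_m -> H} := [ffun i => \sum_j A i j *: u j].

Lemma gtensM (H : lmodType C) m n p (A : 'M[C]_(m, n)) (B : 'M[C]_(n, p)) u :
  gtens A (gtens B u) = gtens (A *m B) u :> {ffun 'I_m -> H}.
Proof.
apply/ffunP => i; rewrite !ffunE.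
under eq_bigr => j _ do rewrite ffunE scaler_sumr.
rewrite exchange_big /=; apply: eq_bigr => k _.
rewrite mxE scaler_suml; apply: eq_bigr => j _; by rewrite scalerA.
Qed.

Lemma gtens1 (H : lmodType C) n (u : {ffun 'I_n -> H}) : gtens 1%:M u = u.
Proof.
apply/ffunP => i; rewrite ffunE (bigD1 i) //= big1 ?addr0.
  by rewrite mxE eqxx scale1r.
by move=> j /negbTE ji; rewrite mxE eq_sym ji scale0r.
Qed.

Lemma matc (U2 U3 : vectType C) n1 n2 n3 (F : 'I_n1 -> U2) (b2 : 'I_n2 -> U2)
  (c2 : U2 -> 'I_n2 -> C) (c3 : U3 -> 'I_n3 -> C) (G : 'Hom(U2, U3)) :
  (forall v, v = \sum_k c2 v k *: b2 k) ->
  (forall i x y, c3 (x + y) i = c3 x i + c3 y i) ->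
  (forall i a x, c3 (a *: x) i = a * c3 x i) ->
  \matrix_(i, j) c3 (G (F j)) i
  = (\matrix_(i, k) c3 (G (b2 k)) i) *m (\matrix_(k, j) c2 (F j) k).
Proof.
move=> hexp hD hZ; apply/matrixP => i j; rewrite !mxE.
have h0 : c3 0 i = 0 by rewrite -(scale0r 0) hZ mul0r.
rewrite {1}(hexp (F j)) linear_sum.
rewrite (big_morph (c3^~ i) (hD i) h0); apply: eq_bigr => k _.
by rewrite linearZ hZ !mxE mulrC.
Qed.

End Aux.
Section Main.
Variable R : realType.
Local Notation C := R[i].

Lemma split_l m n (j : 'I_m) : split (lshift n j) = inl j.
Proof. exact: (unsplitK (inl j)). Qed.
Lemma split_r m n (j : 'I_n) : split (rshift m j) = inr j.
Proof. exact: (unsplitK (inr j)). Qed.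

Lemma expV (V : vectType C) (v : V) :
  v = \sum_k coord (vbasis {:V}) k v *: tnth (vbasis {:V}) k.
Proof.
rewrite {1}(coord_vbasis (memvf v)); apply: eq_bigr => k _.
by rewrite (tnth_nth 0).
Qed.

Lemma expR n (v : 'rV[C]_n) : v = \sum_k v 0 k *: delta_mx 0 k.
Proof. exact: row_sum_delta. Qed.

Lemma rD n (i : 'I_n) (x y : 'rV[C]_n) : (x + y) 0 i = x 0 i + y 0 i.
Proof. by rewrite mxE. Qed.
Lemma rZ n (i : 'I_n) a (x : 'rV[C]_n) : (a *: x) 0 i = a * x 0 i.
Proof. by rewrite mxE. Qed.
Lemma cD (V : vectType C) (i : 'I_(\dim {:V})) (x y : V) :
  coord (vbasis {:V}) i (x + y) = coord (vbasis {:V}) i x + coord (vbasis {:V}) i y.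
Proof. by rewrite linearD. Qed.
Lemma cZ (V : vectType C) (i : 'I_(\dim {:V})) a (x : V) :
  coord (vbasis {:V}) i (a *: x) = a * coord (vbasis {:V}) i x.
Proof. by rewrite linearZ. Qed.

Lemma hom_tensE (V W : vectType C) (H : lmodType C) (L : 'Hom(V, W)) (u : vtens V H) :
  hom_tens L u = gtens (\matrix_(i, j) coord (vbasis {:W}) i (L (tnth (vbasis {:V}) j))) u.
Proof. by apply/ffunP => i; rewrite !ffunE; apply: eq_bigr => j _; rewrite mxE. Qed.
Lemma to_tensE (V : vectType C) (H : lmodType C) (S : 'Hom(V, 'rV[C]_(\dim {:V}))) (u : vtens V H) :
  to_tens S u = gtens (\matrix_(i, j) (S (tnth (vbasis {:V}) j)) 0 i) u.
Proof. by apply/ffunP => i; rewrite !ffunE; apply: eq_bigr => j _; rewrite mxE. Qed.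
Lemma from_tensE (V : vectType C) (H : lmodType C) (Si : 'Hom('rV[C]_(\dim {:V}), V)) u :
  from_tens (H:=H) Si u = gtens (\matrix_(i, j) coord (vbasis {:V}) i (Si (delta_mx 0 j))) u.
Proof. by apply/ffunP => i; rewrite !ffunE; apply: eq_bigr => j _; rewrite mxE. Qed.

Lemma mxtensE (H : lmodType C) n (s : 'M[C]_n) (u : {ffun 'I_n -> H}) :
  mxtens s u = gtens s u.
Proof. by []. Qed.

Lemma lin0 (H K : lmodType C) n (A : {ffun 'I_n -> H} -> {ffun 'I_n -> K}) :
  (forall (a : C) u v, A (a *: u + v) = a *: A u + A v) -> A 0 = 0.
Proof.
move=> hA; have h := hA 1 0 0; rewrite !scale1r addr0 in h.
have e := addrK (A 0) (A 0); rewrite -h subrr in e; by rewrite -e.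
Qed.

End Main.
Theorem lemma3p17 (R : realType) (d : nat)
  (D : forall n, ('I_d -> 'M[R[i]]_n) -> Prop)
  (H K : lmodType R[i]) (ipH : H -> H -> R[i]) (ipK : K -> K -> R[i])
  (f : forall n, ('I_d -> 'M[R[i]]_n) -> {ffun 'I_n -> H} -> {ffun 'I_n -> K})
  (V W : vectType R[i]) (Rt : 'I_d -> 'End(V)) (T : 'I_d -> 'End(W))
  (L : 'Hom(V, W))
  (SR : 'Hom(V, 'rV[R[i]]_(\dim {:V}))) (SRi : 'Hom('rV[R[i]]_(\dim {:V}), V))
  (ST : 'Hom(W, 'rV[R[i]]_(\dim {:W}))) (STi : 'Hom('rV[R[i]]_(\dim {:W}), W)) :
  nc_domain D -> is_hilbert ipH -> is_hilbert ipK ->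
  nc_function D ipH ipK f ->
  sss_witness D Rt SR SRi -> sss_witness D T ST STi ->
  (forall r, (T r \o L = L \o Rt r)%VF) ->
  forall u : vtens V H,
    f_sss f T ST STi (hom_tens L u) = hom_tens L (f_sss f Rt SR SRi u).
Proof.
move=> [hDs _ _] _ _ [fbdd fsum fconj] [cR1 cR2 DR] [cT1 cT2 DT] hTL u.
set nV := \dim {:V}; set nW := \dim {:W}.
set Lp := \matrix_(i, j) (ST (L (SRi (delta_mx 0 j)))) 0 i : 'M[R[i]]_(nW, nV).
set XR := sim_tuple SR SRi Rt; set XT := sim_tuple ST STi T.
have e3 : forall r, XT r *m Lp = Lp *m XR r.
  move=> r.
  have := @matc R _ _ nV nW nW (fun j => ST (L (SRi (delta_mx 0 j)))) (delta_mx 0)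
    (fun (v : 'rV[R[i]]_nW) i => v 0 i) (fun (v : 'rV[R[i]]_nW) i => v 0 i) (ST \o T r \o STi)%VF (@expR R nW)
    (@rD R nW) (@rZ R nW).
  rewrite /XT /sim_tuple /=.
  under eq_mx => i j do rewrite !comp_lfunE cT1.
  under [X in _ = X *m _ -> _]eq_mx => i j do rewrite !comp_lfunE.
  move=> <-.
  have := @matc R _ _ nV nV nW (fun j => SR (Rt r (SRi (delta_mx 0 j)))) (delta_mx 0)
    (fun (v : 'rV[R[i]]_nV) i => v 0 i) (fun (v : 'rV[R[i]]_nW) i => v 0 i) (ST \o L \o SRi)%VF (@expR R nV)
    (@rD R nW) (@rZ R nW).
  under eq_mx => i j do rewrite !comp_lfunE cR1.
  under [X in _ = X *m _ -> _]eq_mx => i j do rewrite !comp_lfunE.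
  move=> <-.
  apply/matrixP => i j; rewrite !mxE.
  by rewrite -[T r (L _)]comp_lfunE hTL comp_lfunE.
set MST := \matrix_(i, j) (ST (tnth (vbasis {:W}) j)) 0 i : 'M[R[i]]_(nW, nW).
set ML := \matrix_(i, j) coord (vbasis {:W}) i (L (tnth (vbasis {:V}) j)) : 'M[R[i]]_(nW, nV).
set MSR := \matrix_(i, j) (SR (tnth (vbasis {:V}) j)) 0 i : 'M[R[i]]_(nV, nV).
set MSTi := \matrix_(i, j) coord (vbasis {:W}) i (STi (delta_mx 0 j)) : 'M[R[i]]_(nW, nW).
set MSRi := \matrix_(i, j) coord (vbasis {:V}) i (SRi (delta_mx 0 j)) : 'M[R[i]]_(nV, nV).
have e1 : MST *m ML = Lp *m MSR.
  have := @matc R _ _ nV nW nW (fun j => L (tnth (vbasis {:V}) j)) (tnth (vbasis {:W}))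
    (fun v i => coord (vbasis {:W}) i v) (fun (v : 'rV[R[i]]_nW) i => v 0 i) ST (@expV R W)
    (@rD R nW) (@rZ R nW).
  move=> <-.
  have := @matc R _ _ nV nV nW (fun j => SR (tnth (vbasis {:V}) j)) (delta_mx 0)
    (fun (v : 'rV[R[i]]_nV) i => v 0 i) (fun (v : 'rV[R[i]]_nW) i => v 0 i) (ST \o L \o SRi)%VF (@expR R nV)
    (@rD R nW) (@rZ R nW).
  under eq_mx => i j do rewrite !comp_lfunE cR1.
  under [X in _ = X *m _ -> _]eq_mx => i j do rewrite !comp_lfunE.
  by move=> <-.
have e2 : MSTi *m Lp = ML *m MSRi.
  have := @matc R _ _ nV nV nW (fun j => SRi (delta_mx 0 j)) (tnth (vbasis {:V}))
    (fun v i => coord (vbasis {:V}) i v) (fun v i => coord (vbasis {:W}) i v) L (@expV R V)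
    (@cD R W) (@cZ R W).
  move=> <-.
  have := @matc R _ _ nV nW nW (fun j => ST (L (SRi (delta_mx 0 j)))) (delta_mx 0)
    (fun (v : 'rV[R[i]]_nW) i => v 0 i) (fun v i => coord (vbasis {:W}) i v) STi (@expR R nW)
    (@cD R W) (@cZ R W).
  under eq_mx => i j do rewrite cT1.
  by move=> <-.
set s := block_mx 1%:M 0 Lp 1%:M : 'M[R[i]]_(nV + nW).
have ss' : s *m block_mx 1%:M 0 (- Lp) 1%:M = 1%:M.
  rewrite mulmx_block !mul1mx !mulmx1 !mul0mx !mulmx0 !addr0 add0r subrr.
  by rewrite -scalar_mx_block.
have su : s \in unitmx by case: (mulmx1_unit ss').
set x := tuple_dsum XR XT.
have xs : forall r, x r *m s = s *m x r.
  move=> r; rewrite /x /tuple_dsum /s !mulmx_block.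
  by rewrite !mul1mx !mulmx1 !mul0mx !mulmx0 !addr0 !add0r e3.
have conjx : tuple_conj (invmx s) s x = x.
  by apply: functional_extensionality => r; rewrite /tuple_conj -mulmxA xs mulKmx.
have Dx : D (nV + nW)%N x by apply: hDs.
have key : forall w, mxtens s (f _ x w) = f _ x (mxtens s w).
  have Dc : D (nV + nW)%N (tuple_conj (invmx s) s x) by rewrite conjx.
  move=> w; have := fconj _ s x su Dx Dc w.
  rewrite conjx => ->.
  by rewrite !mxtensE gtensM mulmxV // gtens1.
have key2 : forall u1 : {ffun 'I_nV -> H}, gtens Lp (f nV XR u1) = f nW XT (gtens Lp u1).
  move=> u1.
  pose w : {ffun 'I_(nV + nW) -> H} := [ffun i => match split i with inl a => u1 a | inr _ => 0 end].
  have fT0 : f nW XT 0 = 0 by apply: lin0; case: (fbdd _ _ DT).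
  have wl : [ffun k => w (lshift nW k)] = u1 by apply/ffunP => k; rewrite !ffunE split_l.
  have wr : [ffun k => w (rshift nV k)] = 0 by apply/ffunP => k; rewrite !ffunE split_r.
  have sw : [ffun k => mxtens s w (rshift nV k)] = gtens Lp u1.
    apply/ffunP => k; rewrite !ffunE big_split_ord /=.
    rewrite [X in _ + X]big1 ?addr0.
      by apply: eq_bigr => j _; rewrite block_mxEdl ffunE split_l.
    by move=> j _; rewrite ffunE split_r scaler0.
  apply/ffunP => k.
  have h := congr1 (fun g : {ffun 'I_(nV + nW) -> K} => g (rshift nV k)) (key w); simpl in h.
  rewrite /x !(fsum _ _ _ _ DR DT) in h.
  rewrite [X in _ = X]ffunE split_r sw in h; rewrite -h.
  rewrite /mxtens !ffunE big_split_ord /=.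
  rewrite [X in _ + X]big1 ?addr0.
    by apply: eq_bigr => j _; rewrite block_mxEdl ffunE split_l wl.
  by move=> j _; rewrite ffunE split_r wr fT0 ffunE scaler0.
rewrite /f_sss !to_tensE !hom_tensE !from_tensE -/MST -/ML -/MSR -/MSTi -/MSRi -/XR -/XT.
by rewrite gtensM e1 -gtensM -key2 !gtensM e2.
Qed.
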